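(* Let $A$ be a metric space and let $a:\mathbb{R}^N\times A\to S^N$, $b:\mathbb{R}^N\times A\to\mathbb{R}^N$, $c:\mathbb{R}^N\times A\to\mathbb{R}$ be continuous. For $\alpha\in A$ set $L^\alpha u:=\mathrm{tr}(a(x,\alpha)D^2u)+b(x,\alpha)\cdot Du$ and $G[u]:=\inf_{\alpha\in A}\{-L^\alpha u+c(x,\alpha)u\}$. Assume: (i) $F(x,t,p,X)=\inf_{\alpha\in A}\{-\mathrm{tr}(a(x,\alpha)X)-b(x,\alpha)\cdot p+c(x,\alpha)t\}$ is continuous on $\mathbb{R}^N\times\mathbb{R}\times\mathbb{R}^N\times S^N$, $c\ge 0$, and $G$ satisfies the Comparison Principle in every bounded open set $\Omega$: if $u,v$ are respectively a viscosity subsolution and supersolution of $G[u]=0$ in $\Omega$ with $u\le v$ on $\partial\Omega$, then $u\le v$ in $\Omega$; (ii) $G$ satisfies the Strong Maximum Principle: any viscosity subsolution of $G[u]=0$ in $\mathbb{R}^N$ that attains an interior nonnegative maximum is constant; (iii) there exist $R_o\ge0$ and a lower semicontinuous $w:\mathbb{R}^N\to\mathbb{R}$ such that $G[w]\ge0$ in the viscosity sense in $\{|x|>R_o\}$ and $\lim_{|x|\to\infty}w(x)=+\infty$. Let $u\in USC(\mathbb{R}^N)$ satisfy $G[u]\le0$ in $\mathbb{R}^N$ in the viscosity sense and $\limsup_{|x|\to\infty}\frac{u(x)}{w(x)}\le 0$. If either $u\ge0$ or $c(x,\alpha)=0$ for all $x,\alpha$, then $u$ is constant.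
   Context: $S^N$ denotes the space of real symmetric $N\times N$ matrices. Sub- and supersolutions are meant in the viscosity sense. *)

(* Defs.v *)
From HB Require Import structures.
From mathcomp Require Import all_boot all_order all_algebra.
From mathcomp Require Import all_classical all_reals topology normedtype.
Set Implicit Arguments. Unset Strict Implicit. Unset Printing Implicit Defensive.
Import Order.TTheory GRing.Theory Num.Theory.
Import numFieldNormedType.Exports.
Local Open Scope classical_set_scope.
Local Open Scope ring_scope.

Section Defs.
Variables (R : realType) (N : nat).
Notation V := 'rV[R]_N.

Definition dotv (p q : V) : R := \sum_(i < N) p 0 i * q 0 i.
Definition enorm (x : V) : R := Num.sqrt (dotv x x).

Definition symm (X : 'M[R]_N) : Prop := X^T = X.

Definition usc_on (D : set V) (u : V -> R) : Prop :=
  forall x, D x -> forall e : R, 0 < e ->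
    exists2 d : R, 0 < d & forall y, D y -> enorm (y - x) < d -> u y < u x + e.
Definition lsc_on (D : set V) (u : V -> R) : Prop :=
  forall x, D x -> forall e : R, 0 < e ->
    exists2 d : R, 0 < d & forall y, D y -> enorm (y - x) < d -> u x - e < u y.

Definition has_grad (f : V -> R) (p : V) (x : V) : Prop :=
  forall e : R, 0 < e -> exists2 d : R, 0 < d & forall y, enorm (y - x) < d ->
    `| f y - f x - dotv p (y - x) | <= e * enorm (y - x).
Definition has_jac (g : V -> V) (J : 'M[R]_N) (x : V) : Prop :=
  forall e : R, 0 < e -> exists2 d : R, 0 < d & forall y, enorm (y - x) < d ->
    enorm (g y - g x - (y - x) *m J) <= e * enorm (y - x).

Definition is_C2 (phi : V -> R) (Dphi : V -> V) (D2phi : V -> 'M[R]_N) : Prop :=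
  (forall x, has_grad phi (Dphi x) x) /\ (forall x, has_jac Dphi (D2phi x) x) /\
  continuous D2phi.

Definition Fset (A : Type) (a : V -> A -> 'M[R]_N) (b : V -> A -> V)
  (c : V -> A -> R) (x : V) (t : R) (p : V) (X : 'M[R]_N) : set R :=
  [set - \tr (a x al *m X) - dotv (b x al) p + c x al * t | al in [set: A]].
Definition Fop (A : Type) a b c x t p X : R := inf (@Fset A a b c x t p X).

Definition visc_sub (F : V -> R -> V -> 'M[R]_N -> R) (Om : set V) (u : V -> R)
  : Prop :=
  usc_on Om u /\
  forall phi Dphi D2phi x0, is_C2 phi Dphi D2phi -> Om x0 ->
    (exists2 r : R, 0 < r & forall y, enorm (y - x0) < r ->
        u y - phi y <= u x0 - phi x0) ->
    F x0 (u x0) (Dphi x0) (D2phi x0) <= 0.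
Definition visc_super (F : V -> R -> V -> 'M[R]_N -> R) (Om : set V) (v : V -> R)
  : Prop :=
  lsc_on Om v /\
  forall phi Dphi D2phi x0, is_C2 phi Dphi D2phi -> Om x0 ->
    (exists2 r : R, 0 < r & forall y, enorm (y - x0) < r ->
        v x0 - phi x0 <= v y - phi y) ->
    0 <= F x0 (v x0) (Dphi x0) (D2phi x0).

Definition bounded_set (Om : set V) : Prop :=
  exists M : R, forall x, Om x -> enorm x <= M.

Definition comparison_principle (F : V -> R -> V -> 'M[R]_N -> R) : Prop :=
  forall Om : set V, open Om -> bounded_set Om ->
  forall u v : V -> R, usc_on (closure Om) u -> lsc_on (closure Om) v ->
    visc_sub F Om u -> visc_super F Om v ->
    (forall x, (closure Om `\` Om) x -> u x <= v x) ->
    forall x, Om x -> u x <= v x.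

Definition strong_max_principle (F : V -> R -> V -> 'M[R]_N -> R) : Prop :=
  forall u : V -> R, visc_sub F [set: V] u ->
  forall x0, (forall x, u x <= u x0) -> 0 <= u x0 -> forall x, u x = u x0.

End Defs.

(* Main.v *)
Require Import Defs.
From HB Require Import structures.
From mathcomp Require Import all_boot all_order all_algebra.
From mathcomp Require Import all_classical all_reals topology normedtype.
From mathcomp Require Import realfun finmap ring lra.
Import Order.TTheory GRing.Theory Num.Theory.
Import numFieldNormedType.Exports.
Local Open Scope classical_set_scope.
Local Open Scope ring_scope.

Set Implicit Arguments.
Unset Strict Implicit.
Section Helpers.
Variables (R : realType) (N : nat).
Local Notation V := 'rV[R]_N.

Lemma dotv_ge0 (x : V) : 0 <= dotv x x.
Proof. by rewrite /dotv; apply: sumr_ge0 => i _; rewrite -expr2 sqr_ge0. Qed.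

Lemma enorm_ge0 (x : V) : 0 <= enorm x.
Proof. exact: sqrtr_ge0. Qed.

Lemma dotvZl k (p q : V) : dotv (k *: p) q = k * dotv p q.
Proof. by rewrite /dotv mulr_sumr; apply: eq_bigr => i _; rewrite mxE mulrA. Qed.

Lemma dotvZr k (p q : V) : dotv p (k *: q) = k * dotv p q.
Proof.
rewrite /dotv mulr_sumr; apply: eq_bigr => i _.
by rewrite mxE mulrA (mulrC _ k) mulrA.
Qed.

Lemma enormZ k (x : V) : enorm (k *: x) = `|k| * enorm x.
Proof.
by rewrite /enorm dotvZl dotvZr mulrA -expr2 sqrtrM ?sqr_ge0 // sqrtr_sqr.
Qed.

Lemma coord_le_mx (x : V) i : `|x 0 i| <= `|x|.
Proof.
have /mapP[j Hj ->] : `|x ord0 i| \in [seq `|x k.1 k.2| | k : 'I_1 * 'I_N].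
  by apply/mapP; exists (ord0, i) => //=; rewrite mem_enum.
by rewrite [leRHS]/Num.Def.normr /= mx_normrE; apply/bigmax_geP; right => /=; exists j.
Qed.

Lemma coord_le_enorm (x : V) i : `|x 0 i| <= enorm x.
Proof.
rewrite /enorm -sqrtr_sqr ler_sqrt ?dotv_ge0 //.
rewrite /dotv (bigD1 i) //= -expr2 lerDl; apply: sumr_ge0 => j _.
by rewrite -expr2 sqr_ge0.
Qed.

Lemma enorm_le (x : V) : enorm x <= Num.sqrt N%:R * `|x|.
Proof.
rewrite -(ger0_norm (normr_ge0 x)) -sqrtr_sqr -sqrtrM ?ler0n //.
rewrite /enorm ler_sqrt; last by rewrite mulr_ge0 ?ler0n ?sqr_ge0.
rewrite /dotv (le_trans (y := \sum_(i < N) `|x| ^+ 2)) //.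
  apply: ler_sum => i _; rewrite -expr2 -(real_normK (num_real (x 0 i))).
  rewrite lerXn2r ?nnegrE ?normr_ge0 //.
  exact: coord_le_mx.
rewrite sumr_const card_ord mulr_natl.
done.
Qed.

Lemma cont_sum (r : seq 'I_N) (F : 'I_N -> V -> R) :
  (forall i, continuous (F i)) -> continuous (fun y => \sum_(i <- r) F i y).
Proof.
move=> hF; elim: r => [|j r IH].
  have -> : (fun y : V => \sum_(i <- [::]) F i y) = fun=> 0.
    by apply/funext => y; rewrite big_nil.
  exact: cst_continuous.
have -> : (fun y : V => \sum_(i <- j :: r) F i y) =
          (F j + fun y => \sum_(i <- r) F i y).
  by apply/funext => y; rewrite big_cons.
by move=> x; apply: continuousD; [exact: hF|exact: IH].
Qed.

Lemma enorm_cont : continuous (@enorm R N).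
Proof.
have hd : continuous (fun x : V => dotv x x).
  apply: cont_sum => i x; apply: (@continuousM _ _ (fun y : V => y 0 i) (fun y : V => y 0 i));
  exact: coord_continuous.
move=> x; apply: (continuous_comp (hd x)); exact: sqrt_continuous.
Qed.


Lemma enorm_nbhs (x : V) d : 0 < d -> nbhs x [set y | enorm (y - x) < d].
Proof.
move=> d0; rewrite -filter_from_norm_nbhs.
have s0 : 0 < Num.sqrt (N%:R : R) + 1 by have := sqrtr_ge0 (N%:R : R); lra.
exists (d / (Num.sqrt N%:R + 1)); first by rewrite /= divr_gt0.
move=> y /=; rewrite distrC => hy.
apply: (le_lt_trans (enorm_le _)).
apply: (le_lt_trans (y := (Num.sqrt N%:R + 1) * `|y - x|)).
  by rewrite ler_wpM2r ?normr_ge0 // lerDl.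
by rewrite mulrC -ltr_pdivlMr.
Qed.

Lemma usc_open (u : V -> R) t : usc_on setT u -> open [set y | u y < t].
Proof.
move=> hu; rewrite openE => x /= hx.
have e0 : 0 < t - u x by rewrite subr_gt0.
have [d d0 hd] := hu x I (t - u x) e0.
rewrite /interior; move: (@enorm_nbhs x d d0); apply: filterS => y /= hy.
by have := hd y I hy; rewrite addrC subrK.
Qed.

Lemma seq_max (s : seq R) : s != [::] ->
  exists2 M, M \in s & forall t, t \in s -> t <= M.
Proof.
elim: s => [//|a s IH] _.
case: (eqVneq s [::]) => [->|sn].
  by exists a; rewrite ?mem_seq1 // => t; rewrite mem_seq1 => /eqP->.
have [M Ms hM] := IH sn.
case: (leP a M) => aM.
  exists M; first by rewrite in_cons Ms orbT.
  by move=> t; rewrite in_cons => /orP[/eqP->//|/hM].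
exists a; first by rewrite in_cons eqxx.
move=> t; rewrite in_cons => /orP[/eqP->//|/hM tM].
exact: (le_trans tM (ltW aM)).
Qed.

Lemma usc_max (K : set V) (u : V -> R) : compact K -> K !=set0 ->
  usc_on setT u -> exists2 x0, K x0 & forall x, K x -> u x <= u x0.
Proof.
rewrite compact_cover => cK [x1 Kx1] hu.
have cov_ne : forall (D' : {fset R}),
    K `<=` \bigcup_(i in [set` D']) [set y | u y < i] -> (D' : seq R) != [::].
  move=> D' hc; have [t Dt _] := hc x1 Kx1.
  apply/eqP => h; have : t \in (D' : seq R) := Dt. by rewrite h.
have [D' _ hD'] := cK R setT (fun t => [set y | u y < t])
  (fun t _ => usc_open (t := t) hu) (fun x Kx => ex_intro2 _ _ (u x + 1) I
    (ltr_pwDr ltr01 (lexx (u x)))).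
have [M _ hM] := seq_max (cov_ne _ hD').
pose S := u @` K.
have supS : has_sup S.
  split; first by exists (u x1), x1.
  exists M => _ [x Kx <-]; have [t Dt ht] := hD' x Kx.
  exact: (le_trans (ltW ht) (hM t Dt)).
apply: contrapT => hno.
have lt_s : forall x, K x -> u x < sup S.
  move=> x Kx; have := sup_upper_bound supS (ex_intro2 _ _ x Kx erefl).
  rewrite le_eqVlt => /orP[/eqP ex|//]; exfalso; apply: hno.
  exists x => // y Ky; rewrite ex; apply: sup_upper_bound => //; by exists y.
have [D2 sD2 hD2] := cK R [set t | t < sup S] (fun t => [set y | u y < t])
  (fun t _ => usc_open (t := t) hu) (fun x Kx => ex_intro2 _ _ ((u x + sup S) / 2)
    ((midf_lt (lt_s x Kx)).2) ((midf_lt (lt_s x Kx)).1)).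
have [M2 M2in hM2] := seq_max (cov_ne _ hD2).
have : sup S <= M2.
  apply: ge_sup; first by exists (u x1), x1.
  move=> _ [x Kx <-]; have [t Dt ht] := hD2 x Kx.
  exact: (le_trans (ltW ht) (hM2 t Dt)).
have := sD2 _ M2in; rewrite in_setE /= => h; by rewrite leNgt h.
Qed.

Lemma ball_compact (r : R) : compact [set x : V | enorm x <= r].
Proof.
have cl : closed [set x : V | enorm x <= r].
  exact: (proj1 (continuous_closedP (@enorm R N)) enorm_cont _ (@closed_le R r)).
apply: (subclosed_compact cl (@rV_compact _ N (fun _ => `[-r, r]%classic) _)).
  by move=> _; exact: segment_compact.
move=> x /= hx i; rewrite /= in_itv /= -ler_norml.
exact: le_trans (coord_le_enorm x i) hx.
Qed.

Lemma enorm0 : enorm (0 : V) = 0.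
Proof. by rewrite -(scale0r (0 : V)) enormZ normr0 mul0r. Qed.

Lemma is_C2_affine (phi : V -> R) Dphi D2phi k c0 :
  is_C2 phi Dphi D2phi ->
  is_C2 (fun y => k * phi y + c0) (fun y => k *: Dphi y) (fun y => k *: D2phi y).
Proof.
move=> [hg [hj hc]].
have k1 : 0 < `|k| + 1 by have := normr_ge0 k; lra.
split; [|split].
- move=> x e e0.
  have e'0 : 0 < e / (`|k| + 1) by rewrite divr_gt0.
  have [d d0 hd] := hg x _ e'0; exists d => // y hy.
  have -> : k * phi y + c0 - (k * phi x + c0) - dotv (k *: Dphi x) (y - x)
     = k * (phi y - phi x - dotv (Dphi x) (y - x)) by rewrite dotvZl; ring.
  rewrite normrM; apply: (le_trans (y := (`|k| * (e / (`|k| + 1) * enorm (y - x))))).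
    by rewrite ler_wpM2l ?normr_ge0 // hd.
  rewrite mulrA ler_wpM2r ?enorm_ge0 // mulrA ler_pdivrMr //; nra.
- move=> x e e0.
  have e'0 : 0 < e / (`|k| + 1) by rewrite divr_gt0.
  have [d d0 hd] := hj x _ e'0; exists d => // y hy.
  have -> : k *: Dphi y - k *: Dphi x - (y - x) *m (k *: D2phi x)
     = k *: (Dphi y - Dphi x - (y - x) *m D2phi x).
    by rewrite -scalemxAr !scalerBr.
  rewrite enormZ; apply: (le_trans (y := (`|k| * (e / (`|k| + 1) * enorm (y - x))))).
    by rewrite ler_wpM2l ?normr_ge0 // hd.
  rewrite mulrA ler_wpM2r ?enorm_ge0 // mulrA ler_pdivrMr //; nra.
- move=> x; apply: continuousZ; [exact: cst_continuous|exact: hc].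
Qed.

Lemma lsc_scale (D : set V) w eps m : 0 < eps -> lsc_on setT w ->
  lsc_on D (fun x => eps * w x + m).
Proof.
move=> e0 wl x _ e ep; have en : eps != 0 by rewrite gt_eqF.
have [d d0 hd] := wl x I (e / eps) (divr_gt0 ep e0).
exists d => // y _ hy; have h := hd y I hy.
have h2 : eps * (w x - e / eps) < eps * w y by rewrite ltr_pM2l.
have -> : eps * w x + m - e = eps * (w x - e / eps) + m by field.
by rewrite ltrD2r.
Qed.

Section Visc.
Variables (A : Type) (a : V -> A -> 'M[R]_N) (b : V -> A -> V) (c : V -> A -> R).
Hypothesis hs : forall x al, symm (a x al).

Lemma tr_sym x al (X : 'M[R]_N) : \tr (a x al *m X) = \tr (a x al *m (2^-1 *: (X + X^T))).
Proof.
have e : \tr (a x al *m X^T) = \tr (a x al *m X).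
  by rewrite -mxtrace_tr trmx_mul trmxK (hs x al) mxtrace_mulC.
rewrite -scalemxAr mxtraceZ mulmxDr mxtraceD e; field=> //.
Qed.

Lemma symm_sym (X : 'M[R]_N) : symm (2^-1 *: (X + X^T)).
Proof. by rewrite /symm linearZ /= linearD /= trmxK addrC. Qed.

Lemma has_inf_all :
  (forall x t p X, symm X -> has_inf (Fset a b c x t p X)) ->
  forall x t p X, has_inf (Fset a b c x t p X).
Proof.
move=> hi x t p X.
have -> : Fset a b c x t p X = Fset a b c x t p (2^-1 *: (X + X^T)).
  by rewrite /Fset; apply/seteqP; split => z [al _ <-]; exists al => //; rewrite -tr_sym.
apply: hi; exact: symm_sym.
Qed.

Lemma super_sub (Om D : set V) w : Om `<=` D ->
  visc_super (Fop a b c) D w -> visc_super (Fop a b c) Om w.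
Proof.
move=> sOD [wl wt]; split.
  move=> x Ox e e0; have [d d0 hd] := wl x (sOD _ Ox) e e0.
  by exists d => // y Oy; apply: hd; apply: sOD.
by move=> phi Dphi D2phi x0 hC Ox; apply: wt => //; apply: sOD.
Qed.

Lemma super_scale (Om : set V) w eps m :
  (forall x t p X, symm X -> has_inf (Fset a b c x t p X)) -> 0 < eps ->
  (forall x al, 0 <= c x al * m) ->
  visc_super (Fop a b c) Om w ->
  visc_super (Fop a b c) Om (fun x => eps * w x + m).
Proof.
move=> hi e0 hcm [wl wt]; have en : eps != 0 by rewrite gt_eqF.
split.
  move=> x Ox e ep; have [d d0 hd] := wl x Ox (e / eps) (divr_gt0 ep e0).
  exists d => // y Oy hy; have h := hd y Oy hy.
  have h2 : eps * (w x - e / eps) < eps * w y by rewrite ltr_pM2l.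
  have -> : eps * w x + m - e = eps * (w x - e / eps) + m by field.
  by rewrite ltrD2r.
move=> phi Dphi D2phi x0 hC Ox [r r0 hr].
have hC' := is_C2_affine (eps^-1) (- (eps^-1 * m)) hC.
have ei : 0 < eps^-1 by rewrite invr_gt0.
have h0 := wt _ _ _ x0 hC' Ox.
have {h0} h0 : 0 <= Fop a b c x0 (w x0) (eps^-1 *: Dphi x0) (eps^-1 *: D2phi x0).
  apply: h0; exists r => // y hy; have h := hr y hy.
  have h2 : eps^-1 * (eps * w x0 + m - phi x0) <= eps^-1 * (eps * w y + m - phi y).
    by rewrite ler_pM2l.
  have -> : w x0 - (eps^-1 * phi x0 + - (eps^-1 * m)) =
    eps^-1 * (eps * w x0 + m - phi x0) by field.
  have -> : w y - (eps^-1 * phi y + - (eps^-1 * m)) =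
    eps^-1 * (eps * w y + m - phi y) by field.
  exact: h2.
have hin := has_inf_all hi x0 (w x0) (eps^-1 *: Dphi x0) (eps^-1 *: D2phi x0).
rewrite /Fop; apply: lb_le_inf; first by have [[z hz] _] := has_inf_all hi x0 (eps * w x0 + m) (Dphi x0) (D2phi x0); exists z.
move=> _ [al _ <-].
have := ge_inf hin.2 (ex_intro2 _ _ al I erefl).
move=> /(le_trans h0); rewrite -scalemxAr mxtraceZ dotvZr => hs0.
have hm := hcm x0 al.
set T := \tr _ in hs0 *; set B := dotv _ _ in hs0 *.
have -> : - T - B + c x0 al * (eps * w x0 + m) =
  eps * (- (eps^-1 * T) - eps^-1 * B + c x0 al * w x0) + c x0 al * m by field.
by apply: addr_ge0 => //; apply: mulr_ge0 => //; exact: ltW.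
Qed.

Lemma sub_shift (u : V -> R) k : (forall x al, c x al = 0) ->
  visc_sub (Fop a b c) setT u -> visc_sub (Fop a b c) setT (fun x => u x + k).
Proof.
move=> hc0 [ul ut]; split.
  move=> x _ e e0; have [d d0 hd] := ul x I e e0.
  by exists d => // y _ hy; have := hd y I hy; lra.
move=> phi Dphi D2phi x0 hC _ [r r0 hr].
have hC' := is_C2_affine 1 (- k) hC.
have FE : forall x t t' p X, Fset a b c x t p X = Fset a b c x t' p X.
  move=> x t t' p X; rewrite /Fset; apply/seteqP; split => z [al _ <-];
  by exists al => //; rewrite !hc0 !mul0r.
rewrite /Fop (FE _ _ (u x0)).
have := ut _ _ _ x0 hC' I; rewrite !scale1r; apply.
exists r => // y hy; have := hr y hy; rewrite !mul1r; lra.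
Qed.

End Visc.

End Helpers.
Unset Implicit Arguments.
Set Strict Implicit.

Theorem theorem2p1 (R : realType) (N : nat) (A : pseudoMetricType R)
  (a : 'rV[R]_N -> A -> 'M[R]_N) (b : 'rV[R]_N -> A -> 'rV[R]_N)
  (c : 'rV[R]_N -> A -> R) (Ro : R) (w : 'rV[R]_N -> R)
  (u : 'rV[R]_N -> R) :
  hausdorff_space A ->
  (forall x al, symm (a x al)) ->
  continuous (fun z : 'rV[R]_N * A => a z.1 z.2) ->
  continuous (fun z : 'rV[R]_N * A => b z.1 z.2) ->
  continuous (fun z : 'rV[R]_N * A => c z.1 z.2) ->
  (* (i) *)
  (forall x t p X, symm X -> has_inf (Fset a b c x t p X)) ->
  {within [set z : 'rV[R]_N * R * 'rV[R]_N * 'M[R]_N | symm z.2],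
     continuous (fun z : 'rV[R]_N * R * 'rV[R]_N * 'M[R]_N =>
                   Fop a b c z.1.1.1 z.1.1.2 z.1.2 z.2)} ->
  (forall x al, 0 <= c x al) ->
  comparison_principle (Fop a b c) ->
  (* (ii) *)
  strong_max_principle (Fop a b c) ->
  (* (iii) *)
  0 <= Ro ->
  lsc_on [set: 'rV[R]_N] w ->
  visc_super (Fop a b c) [set x | Ro < enorm x] w ->
  (forall M : R, exists Rm : R, forall x, Rm < enorm x -> M < w x) ->
  (* hypotheses on u *)
  usc_on [set: 'rV[R]_N] u ->
  visc_sub (Fop a b c) [set: 'rV[R]_N] u ->
  (forall e : R, 0 < e -> exists Rm : R, forall x, Rm < enorm x ->
       u x / w x <= e) ->
  (forall x, 0 <= u x) \/ (forall x al, c x al = 0) ->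
  exists k : R, forall x, u x = k.
Proof.

Proof.
move=> hA hsym ca cb cc hi Fc c0 CP SMP Ro0 wl ws winf ul us ulim hcase.
have [Rw hRw] := winf 0.
pose R1 := Num.max Ro Rw + 1.
have h1 : Ro <= Num.max Ro Rw by rewrite le_max lexx.
have h2 : Rw <= Num.max Ro Rw by rewrite le_max lexx orbT.
have R1Ro : Ro < R1 by rewrite /R1; lra.
have R1Rw : Rw < R1 by rewrite /R1; lra.
have wpos : forall y, R1 <= enorm y -> 0 < w y.
  by move=> y hy; apply: hRw; apply: lt_le_trans hy.
have K0 : [set x : 'rV[R]_N | enorm x <= R1] !=set0.
  by exists 0; rewrite /= enorm0; lra.
have [x0 Kx0 hx0] := usc_max (@ball_compact R N R1) K0 ul.
set m := u x0.
have hcm : forall y al, 0 <= c y al * m.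
  move=> y al; case: hcase => [hu|hc]; first exact: mulr_ge0 (c0 y al) (hu x0).
  by rewrite hc mul0r.
have umax : forall x, u x <= m.
  move=> x; case: (leP (enorm x) R1) => hx; first exact: hx0.
  have wx := wpos x (ltW hx).
  suff H : forall eps, 0 < eps -> u x <= eps * w x + m.
    rewrite leNgt; apply/negP => hlt.
    pose eps := (u x - m) / (2 * w x).
    have ep : 0 < eps by rewrite /eps divr_gt0 ?subr_gt0 // mulr_gt0.
    have := H eps ep.
    have -> : eps * w x + m = (u x - m) / 2 + m.
      by rewrite /eps; field; rewrite gt_eqF.
    lra.
  move=> eps ep.
  have ep2 : 0 < eps / 2 by rewrite divr_gt0.
  have [Ru hRu] := ulim (eps / 2) ep2.
  have [Rw2 hRw2] := winf (2 * `|m| / eps).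
  pose Rr := Num.max (Num.max (enorm x) R1) (Num.max Ru Rw2) + 1.
  have g1 : enorm x <= Num.max (Num.max (enorm x) R1) (Num.max Ru Rw2).
    by rewrite !le_max lexx.
  have g2 : R1 <= Num.max (Num.max (enorm x) R1) (Num.max Ru Rw2).
    by rewrite !le_max lexx !orbT.
  have g3 : Ru <= Num.max (Num.max (enorm x) R1) (Num.max Ru Rw2).
    by rewrite !le_max lexx !orbT.
  have g4 : Rw2 <= Num.max (Num.max (enorm x) R1) (Num.max Ru Rw2).
    by rewrite !le_max lexx !orbT.
  have xRr : enorm x < Rr by rewrite /Rr; lra.
  have R1Rr : R1 < Rr by rewrite /Rr; lra.
  have RuRr : Ru < Rr by rewrite /Rr; lra.
  have Rw2Rr : Rw2 < Rr by rewrite /Rr; lra.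
  pose Om := [set y : 'rV[R]_N | R1 < enorm y /\ enorm y < Rr].
  pose v := fun y : 'rV[R]_N => eps * w y + m.
  have clsub : forall y, closure Om y -> R1 <= enorm y /\ enorm y <= Rr.
    move=> y; rewrite closureEbigcap => hy.
    have := hy ((@enorm R N @^-1` [set z | R1 <= z]) `&` (@enorm R N @^-1` [set z | z <= Rr])).
    apply; split.
      apply: closedI.
        exact: (proj1 (continuous_closedP (@enorm R N)) (@enorm_cont R N) _ (@closed_ge R R1)).
      exact: (proj1 (continuous_closedP (@enorm R N)) (@enorm_cont R N) _ (@closed_le R Rr)).
    by move=> z [hz1 hz2]; split => /=; apply: ltW.
  have Omo : open Om.
    have -> : Om = (@enorm R N @^-1` [set z | R1 < z]) `&` (@enorm R N @^-1` [set z | z < Rr]).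
      by apply/seteqP; split => z.
    apply: openI.
      exact: (proj1 (continuousP (@enorm R N)) (@enorm_cont R N) _ (@open_gt R R1)).
    exact: (proj1 (continuousP (@enorm R N)) (@enorm_cont R N) _ (@open_lt R Rr)).
  have := CP Om Omo _ u v _ _ _ _ _ x _; apply.
  - by exists Rr => y [_ hy]; apply: ltW.
  - by move=> y _ e e0; have [d d0 hd] := ul y I e e0; exists d => // z _; apply: hd.
  - exact: lsc_scale.
  - case: us => ul' ut; split.
      by move=> y _ e e0; have [d d0 hd] := ul y I e e0; exists d => // z _; apply: hd.
    by move=> phi Dphi D2phi y hC _; apply: ut.
  - apply: (super_scale hsym) => //.
    apply: (super_sub _ ws) => y [hy _] /=; lra.
  - move=> y [cy nOy]; have [k1 k2] := clsub y cy.
    have wy := wpos y k1.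
    rewrite /v; case: (ltP R1 (enorm y)) => k3.
      have ey : enorm y = Rr.
        apply/eqP; rewrite eq_le k2 /= leNgt; apply/negP => k4; apply: nOy; by split.
      have hu1 := hRu y (ltac:(rewrite ey; exact: RuRr)).
      have hw1 := hRw2 y (ltac:(rewrite ey; exact: Rw2Rr)).
      rewrite ler_pdivrMr // in hu1.
      rewrite ltr_pdivrMr // in hw1.
      have hm : - m <= `|m| by rewrite -normrN ler_norm.
      set W := w y in hu1 hw1 wy *.
      have e2 : eps / 2 * W = (eps * W) / 2 by field.
      rewrite e2 in hu1; rewrite (mulrC W) in hw1.
      set E := eps * W in hu1 hw1 *.
      lra.
    have ey : enorm y = R1 by apply/eqP; rewrite eq_le k1 k3.
    have hy : u y <= m by apply: hx0; rewrite /= ey.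
    have := mulr_gt0 ep wy; lra.
  - by split.
case: hcase => [hu|hc].
  by exists m => x; apply: (SMP u us x0 umax (hu x0) x).
exists m => x.
have hmx : forall y, u y + - m <= u x0 + - m by move=> y; have := umax y; rewrite /m; lra.
have h0 : 0 <= u x0 + - m by rewrite /m; lra.
have := SMP (fun y => u y + - m) (sub_shift (- m) hc us) x0 hmx h0 x => /=.
rewrite /m; lra.
Qed.
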